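(* Let $\mu^\ast$ be an upper quasi-density on $\mathbb{H}$, let $A\subseteq B\subseteq\mathbb{H}$ with $\mu^\ast(A)<\mu^\ast(B)$, and let $a,b\in\mathbb{R}$ with $\mu^\ast(A)\le a<b\le\mu^\ast(B)$. Then for every integer $k>(b-a)^{-1}$ there exist $\mathcal{H}_0\subseteq\{0,1,\dots,k-1\}$ and $h_0\in\{0,1,\dots,k-1\}$ such that $$a<\mu^\ast\big(A\cup(B\cap\mathcal{V}_{k,\mathcal{H}_0})\big)<b\le\mu^\ast\big(A\cup(B\cap\mathcal{V}_{k,\mathcal{H}_0\cup\{h_0\}})\big),$$ where $\mathcal{V}_{k,\mathcal{H}}:=\bigcup_{h\in\mathcal{H}}(k\cdot\mathbb{H}+h)$.
   Context: $\mathbb{N}=\{0,1,2,\dots\}$, $\mathbb{N}^+=\{1,2,\dots\}$; $\mathbb{H}$ is one of $\mathbb{Z},\mathbb{N},\mathbb{N}^+$. For $X\subseteq\mathbb{H}$, $k\in\mathbb{N}^+$, $h\in\mathbb{N}$, $k\cdot X+h:=\{kx+h:x\in X\}$. An upper quasi-density on $\mathbb{H}$ is a function $\mu^\ast:\mathcal{P}(\mathbb{H})\to\mathbb{R}$ with $\mu^\ast(\mathbb{H})=1$, $\mu^\ast(X)\le1$ for all $X$, $\mu^\ast(X\cup Y)\le\mu^\ast(X)+\mu^\ast(Y)$ for all $X,Y$, and $\mu^\ast(k\cdot X+h)=\frac1k\mu^\ast(X)$ for all $X\subseteq\mathbb{H}$, $h,k\in\mathbb{N}^+$. *)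

(* Defs.v *)
From Stdlib Require Import Reals ZArith.
Open Scope R_scope.

(* The three choices of the ambient set H, all viewed inside Z. *)
Inductive HKind := HZ | HN | HNpos.

Definition inH (H : HKind) (z : Z) : Prop :=
  match H with
  | HZ => True
  | HN => (0 <= z)%Z
  | HNpos => (1 <= z)%Z
  end.

Definition subsetZ (X Y : Z -> Prop) : Prop := forall z, X z -> Y z.
Definition unionZ (X Y : Z -> Prop) : Z -> Prop := fun z => X z \/ Y z.
Definition interZ (X Y : Z -> Prop) : Z -> Prop := fun z => X z /\ Y z.

Definition dil (k h : Z) (X : Z -> Prop) : Z -> Prop :=
  fun z => exists x, X x /\ z = (k * x + h)%Z.

(* Upper quasi-density on H; mu is only constrained on subsets of H. *)
Definition is_upper_quasi_density (H : HKind) (mu : (Z -> Prop) -> R) : Prop :=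
  mu (inH H) = 1 /\
  (forall X, subsetZ X (inH H) -> mu X <= 1) /\
  (forall X Y, subsetZ X (inH H) -> subsetZ Y (inH H) ->
     mu (unionZ X Y) <= mu X + mu Y) /\
  (forall X (k h : Z), subsetZ X (inH H) -> (1 <= k)%Z -> (1 <= h)%Z ->
     mu (dil k h X) = / IZR k * mu X).

Definition Vset (H : HKind) (k : Z) (Hs : Z -> Prop) : Z -> Prop :=
  fun z => exists h, Hs h /\ dil k h (inH H) z.

(* Main.v *)
Require Import Defs.
From Stdlib Require Import Reals ZArith Lra Lia Classical FunctionalExtensionality PropExtensionality.
Open Scope R_scope.

Lemma mu_ext (mu : (Z -> Prop) -> R) (X Y : Z -> Prop) :
  (forall z, X z <-> Y z) -> mu X = mu Y.
Proof.
  intro E; f_equal; extensionality z; apply propositional_extensionality; apply E.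
Qed.

Lemma mu_nonneg H mu (Hmu : is_upper_quasi_density H mu) X :
  subsetZ X (inH H) -> 0 <= mu X.
Proof.
  destruct Hmu as [_ [_ [Hsub _]]]; intro HX.
  pose proof (Hsub X X HX HX) as S.
  rewrite (mu_ext mu (unionZ X X) X) in S by (intro z; unfold unionZ; tauto).
  lra.
Qed.

Lemma mu_empty H mu (Hmu : is_upper_quasi_density H mu) :
  mu (fun _ => False) = 0.
Proof.
  destruct Hmu as [_ [_ [_ Hdil]]].
  assert (S0 : subsetZ (fun _ : Z => False) (inH H)) by (intros z []).
  pose proof (Hdil _ 1%Z 1%Z S0 ltac:(lia) ltac:(lia)) as E1.
  pose proof (Hdil _ 2%Z 1%Z S0 ltac:(lia) ltac:(lia)) as E2.
  rewrite (mu_ext mu (dil 1 1 (fun _ => False)) (fun _ => False)) in E1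
    by (intro z; unfold dil; split; [intros [x [[] _]] | intros []]).
  rewrite (mu_ext mu (dil 2 1 (fun _ => False)) (fun _ => False)) in E2
    by (intro z; unfold dil; split; [intros [x [[] _]] | intros []]).
  simpl in E1, E2. lra.
Qed.

Lemma mu_single H mu (Hmu : is_upper_quasi_density H mu) m :
  inH H m -> mu (fun z => z = m) = 0.
Proof.
  intro Hm. destruct Hmu as [_ [_ [_ Hdil]]].
  assert (S0 : subsetZ (fun z => z = m) (inH H)) by (intros z ->; exact Hm).
  set (h2 := Z.max 1 (1 - m)).
  pose proof (Hdil _ 1%Z (m + h2)%Z S0 ltac:(lia) ltac:(unfold h2; lia)) as E1.
  pose proof (Hdil _ 2%Z h2 S0 ltac:(lia) ltac:(unfold h2; lia)) as E2.
  rewrite (mu_ext mu (dil 1 (m + h2) (fun z => z = m)) (fun z => z = (2*m+h2)%Z)) in E1.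
  2:{ intro z; unfold dil; split; [intros [x [-> ->]]; lia | intros ->; exists m; split; [reflexivity|lia]]. }
  rewrite (mu_ext mu (dil 2 h2 (fun z => z = m)) (fun z => z = (2*m+h2)%Z)) in E2.
  2:{ intro z; unfold dil; split; [intros [x [-> ->]]; lia | intros ->; exists m; split; [reflexivity|lia]]. }
  simpl in E1, E2. lra.
Qed.

Lemma mu_sub_single H mu (Hmu : is_upper_quasi_density H mu) Y e :
  subsetZ Y (inH H) -> (forall z, Y z -> z = e) -> mu Y = 0.
Proof.
  intros HY He. destruct (classic (Y e)) as [Ye | nYe].
  - rewrite (mu_ext mu Y (fun z => z = e)).
    + apply (mu_single H); auto.
    + intro z; split; [apply He | intros ->; exact Ye].
  - rewrite (mu_ext mu Y (fun _ => False)).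
    + apply (mu_empty H); auto.
    + intro z; split; [intro Yz; pose proof (He z Yz); subst; contradiction | intros []].
Qed.

Lemma mu_finite H mu (Hmu : is_upper_quasi_density H mu) (n : nat) :
  forall Y, subsetZ Y (inH H) -> (forall z, Y z -> (0 <= z < Z.of_nat n)%Z) -> mu Y = 0.
Proof.
  induction n as [|n IH]; intros Y HY Hb.
  - apply (mu_sub_single H mu Hmu Y 0%Z HY). intros z Yz; specialize (Hb z Yz); lia.
  - pose proof (mu_nonneg H mu Hmu Y HY).
    destruct Hmu as (A1 & A2 & Hsub & A4).
    assert (S1 : subsetZ (fun z => Y z /\ (z < Z.of_nat n)%Z) (inH H)) by (intros z [Yz _]; auto).
    assert (S2 : subsetZ (fun z => Y z /\ z = Z.of_nat n) (inH H)) by (intros z [Yz _]; auto).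
    pose proof (Hsub _ _ S1 S2) as U.
    rewrite (mu_ext mu (unionZ _ _) Y) in U.
    2:{ intro z; unfold unionZ; split; [tauto|]. intro Yz; specialize (Hb z Yz); destruct (Z.lt_ge_cases z (Z.of_nat n)); [left|right]; split; auto; lia. }
    rewrite (IH _ S1) in U by (intros z [Yz Hz]; specialize (Hb z Yz); lia).
    rewrite (mu_sub_single H mu (conj A1 (conj A2 (conj Hsub A4))) _ (Z.of_nat n) S2) in U by (intros z [_ ->]; auto).
    lra.
Qed.

Lemma mu_residue H mu (Hmu : is_upper_quasi_density H mu) (B : Z -> Prop) k j :
  subsetZ B (inH H) -> (1 <= k)%Z -> (0 <= j)%Z ->
  mu (interZ B (dil k j (inH H))) <= / IZR k.
Proof.
  intros HB Hk Hj.
  set (Y := interZ B (dil k j (inH H))).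
  set (X' := fun x => inH H x /\ Y (k * x + j + k)%Z).
  set (E := fun z => Y z /\ ~ dil k (j + k) X' z).
  assert (SX : subsetZ X' (inH H)) by (intros z [h _]; auto).
  assert (SD : subsetZ (dil k (j + k) X') (inH H)).
  { intros z [x [[Hx _] ->]]. destruct H; simpl in *; auto; nia. }
  assert (SE : subsetZ E (inH H)) by (intros z [[Bz _] _]; auto).
  pose proof (mu_nonneg H mu Hmu X' SX).
  destruct Hmu as (A1 & A2 & Hsub & Hdil).
  pose proof (Hsub _ _ SD SE) as U.
  rewrite (mu_ext mu (unionZ _ _) Y) in U.
  2:{ intro z; unfold unionZ, E; split.
      - intros [[x [[_ Yx] ->]] | [Yz _]]; auto. replace (k * x + (j + k))%Z with (k * x + j + k)%Z by lia; auto.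
      - intro Yz; destruct (classic (dil k (j + k) X' z)); auto. }
  rewrite (Hdil X' k (j + k)%Z SX Hk ltac:(lia)) in U.
  rewrite (mu_sub_single H mu (conj A1 (conj A2 (conj Hsub Hdil))) E
             (k * (match H with HNpos => 1 | _ => 0 end) + j)%Z SE) in U.
  2:{ intros z [[Bz [x [Hx ->]]] nd]. destruct (classic (inH H (x - 1)%Z)) as [Hx1 | Hx1].
      - exfalso; apply nd. exists (x - 1)%Z. split; [split; auto|lia].
        unfold Y, interZ. replace (k * (x - 1) + j + k)%Z with (k * x + j)%Z by lia.
        split; auto. exists x; auto.
      - destruct H; simpl in *; [exfalso; auto | assert (x = 0)%Z by lia; subst; lia | assert (x = 1)%Z by lia; subst; lia]. }
  pose proof (A2 X' SX).
  assert (0 < / IZR k) by (apply Rinv_0_lt_compat; apply IZR_lt; lia).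
  assert (/ IZR k * mu X' <= / IZR k * 1) by (apply Rmult_le_compat_l; lra).
  lra.
Qed.

Definition gset H k (A B : Z -> Prop) (j : nat) :=
  unionZ A (interZ B (Vset H k (fun h => (0 <= h < Z.of_nat j)%Z))).

Lemma gset_sub H k A B j : subsetZ A B -> subsetZ B (inH H) -> subsetZ (gset H k A B j) (inH H).
Proof. intros HAB HB z [Az | [Bz _]]; auto. Qed.

Lemma g_step H mu (Hmu : is_upper_quasi_density H mu) k A B j :
  subsetZ A B -> subsetZ B (inH H) -> (1 <= k)%Z ->
  mu (gset H k A B (S j)) <= mu (gset H k A B j) + / IZR k.
Proof.
  intros HAB HB Hk.
  pose proof (mu_residue H mu Hmu B k (Z.of_nat j) HB Hk ltac:(lia)).
  destruct Hmu as (A1 & A2 & Hsub & Hdil).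
  assert (S2 : subsetZ (interZ B (dil k (Z.of_nat j) (inH H))) (inH H)) by (intros z [Bz _]; auto).
  pose proof (Hsub _ _ (gset_sub H k A B j HAB HB) S2) as U.
  rewrite (mu_ext mu (unionZ _ _) (gset H k A B (S j))) in U. 1: lra.
  intro z; unfold gset, unionZ, interZ, Vset. split.
  - intros [[Az | [Bz [h [Hh D]]]] | [Bz D]]; auto; right; split; auto; exists h || exists (Z.of_nat j); split; auto; lia.
  - intros [Az | [Bz [h [Hh D]]]]; auto.
    destruct (Z.eq_dec h (Z.of_nat j)) as [-> | ne]; auto.
    left; right; split; auto; exists h; split; auto; lia.
Qed.

Lemma g_top H mu (Hmu : is_upper_quasi_density H mu) k A B :
  subsetZ A B -> subsetZ B (inH H) -> (1 <= k)%Z ->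
  mu B <= mu (gset H k A B (Z.to_nat k)).
Proof.
  intros HAB HB Hk.
  set (R' := fun z => B z /\ ~ gset H k A B (Z.to_nat k) z).
  assert (SR : subsetZ R' (inH H)) by (intros z [Bz _]; auto).
  assert (M : mu R' = 0).
  { apply (mu_finite H mu Hmu (Z.to_nat k) R' SR).
    intros z [Bz nz]. pose proof (HB z Bz) as Hz.
    pose proof (Z.div_mod z k ltac:(lia)) as Dm.
    pose proof (Z.mod_pos_bound z k ltac:(lia)) as Mb.
    set (q := (z / k)%Z) in *. set (r := (z mod k)%Z) in *.
    destruct (classic (inH H q)) as [Hq | Hq].
    - exfalso; apply nz. right. split; auto. exists r. split; [lia|]. exists q; split; auto.
    - destruct H; simpl in *.
      + exfalso; auto.
      + exfalso; apply Hq. apply Z.div_pos; lia.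
      + assert (0 <= q)%Z by (apply Z.div_pos; lia). assert (q = 0)%Z by lia.
        rewrite H0 in Dm. lia. }
  destruct Hmu as (A1 & A2 & Hsub & Hdil).
  pose proof (Hsub _ _ (gset_sub H k A B (Z.to_nat k) HAB HB) SR) as U.
  rewrite (mu_ext mu (unionZ _ _) B) in U. 1: lra.
  intro z; unfold R', unionZ; split.
  - intros [[Az | [Bz _]] | [Bz _]]; auto.
  - intro Bz; destruct (classic (gset H k A B (Z.to_nat k) z)); auto.
Qed.

Lemma crossing (P : nat -> Prop) : forall n : nat, ~ P 0%nat -> P n -> exists j, (j < n)%nat /\ ~ P j /\ P (S j).
Proof.
  induction n as [|n IH]; intros H0 Hn; [contradiction|].
  destruct (classic (P n)) as [Pn | nPn].
  - destruct (IH H0 Pn) as [j [? ?]]; exists j; split; [lia | auto].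
  - exists n; split; [lia | auto].
Qed.

Theorem mainTheorem8 (H : HKind) (mu : (Z -> Prop) -> R)
  (Hmu : is_upper_quasi_density H mu)
  (A B : Z -> Prop) (HAB : subsetZ A B) (HBH : subsetZ B (inH H))
  (Hlt : mu A < mu B) (a b : R)
  (Ha : mu A <= a) (Hab : a < b) (Hb : b <= mu B) :
  forall k : Z, IZR k > / (b - a) ->
  exists (H0 : Z -> Prop) (h0 : Z),
    (forall h, H0 h -> (0 <= h < k)%Z) /\ (0 <= h0 < k)%Z /\
    a < mu (unionZ A (interZ B (Vset H k H0))) /\
    mu (unionZ A (interZ B (Vset H k H0))) < b /\
    b <= mu (unionZ A (interZ B (Vset H k (fun h => H0 h \/ h = h0)))).
Proof.
  intros k Hk.
  assert (Hba : 0 < / (b - a)) by (apply Rinv_0_lt_compat; lra).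
  assert (Hk0 : (0 < k)%Z) by (apply lt_IZR; lra).
  assert (Hk1 : (1 <= k)%Z) by lia.
  assert (Hinv : / IZR k < b - a).
  { replace (b - a) with (/ / (b - a)) by (field; lra).
    apply Rinv_lt_contravar; [apply Rmult_lt_0_compat; lra | lra]. }
  set (g := fun j => mu (gset H k A B j)).
  assert (g0 : g 0%nat = mu A).
  { unfold g; apply mu_ext; intro z; unfold gset, unionZ, interZ, Vset; split.
    - intros [Az | [_ [h [Hh _]]]]; auto; simpl in Hh; lia.
    - auto. }
  destruct (crossing (fun j => b <= g j) (Z.to_nat k)) as [j [Hj [nP P]]].
  - rewrite g0; lra.
  - pose proof (g_top H mu Hmu k A B HAB HBH Hk1); unfold g; lra.
  - pose proof (g_step H mu Hmu k A B j HAB HBH Hk1) as St.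
    exists (fun h => (0 <= h < Z.of_nat j)%Z), (Z.of_nat j).
    fold (gset H k A B j). fold (g j).
    split; [intros h Hh; lia|]. split; [lia|].
    split; [unfold g in *; lra|]. split; [lra|].
    rewrite (mu_ext mu _ (gset H k A B (S j))); [exact P|].
    intro z; unfold gset, unionZ, interZ, Vset; split.
    + intros [Az | [Bz [h [Hh D]]]]; auto; right; split; auto; exists h; split; auto; lia.
    + intros [Az | [Bz [h [Hh D]]]]; auto; right; split; auto; exists h; split; auto; lia.
Qed.
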